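(* Let $P$ be the program NQUEENS. Then $\mathcal{M}_P\subseteq S$; that is, NQUEENS is correct with respect to $S=S_{pq}\cup S_{pqs}$. In fact $S$ is a Herbrand model of NQUEENS: for every ground instance $H\gets B_1,\dots,B_n$ ($n\ge0$) of a clause of NQUEENS, if $B_1,\dots,B_n\in S$ then $H\in S$.
   Context: Terms are built over a fixed alphabet containing the constant $0$, the unary symbol $s$, the list constant $[\,]$ and the binary list constructor $[\cdot|\cdot]$; $\mathcal{HU}$ is the set of ground terms and $\mathcal{HB}$ the set of ground atoms. A natural number $i$ is identified with the term $s^i(0)$. Prolog list notation is used: $[e_1,\dots,e_n|e]$ stands for $e$ when $n=0$, and a list of length $n$ is a term $[e_1,\dots,e_n]$. A term $e$ is the $k$-th member of a term $t$ ($k\ge 1$) if $t=[e_1,\dots,e_{k-1},e|e']$ for some terms $e_1,\dots,e_{k-1},e'$; $e$ is a member of $t$ if it is its $k$-th member for some $k$. A list of distinct members is a list whose elements are pairwise distinct. The program NQUEENS consists of the definite clauses (capitalized names are variables): (C1) $pqs(0,X_1,X_2,X_3)$. (C2) $pqs(s(I),Cs,Us,[X|Ds]) \gets pqs(I,Cs,[Y|Us],Ds),\ pq(s(I),Cs,Us,Ds)$. (C3) $pq(I,[I|X_1],[I|X_2],[I|X_3])$. (C4) $pq(I,[X_1|Cs],[X_2|Us],[X_3|Ds]) \gets pq(I,Cs,Us,Ds)$. $\mathcal{M}_P$ denotes the least Herbrand model of a program $P$. If a number $j$ is the $k$-th member of a list $cs$, the up-diagonal number of $j$ w.r.t. $i$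 in $cs$ is $k+j-i$ and the down-diagonal number is $k+i-j$. A triple $(cs,us,ds)$ of terms is correct up to $m$ w.r.t. $i$ when $0\le m\le i$ and: $cs$ is a list of distinct members and each $j\in\{1,\dots,m\}$ is a member of $cs$; the up-diagonal numbers of $1,\dots,m$ in $cs$ are pairwise distinct, and likewise the down-diagonal numbers; and for each $j\in\{1,\dots,m\}$, if the up-diagonal (resp. down-diagonal) number of $j$ w.r.t. $i$ in $cs$ is $l>0$, then the $l$-th member of $us$ (resp. $ds$) is $j$. Specifications: $S_{pq}=\{pq(i,[c_1,\dots,c_k,i|c],[u_1,\dots,u_k,i|u],[d_1,\dots,d_k,i|d])\in\mathcal{HB}\mid k\ge0\}$; $S_{pqs}=\{pqs(0,cs,us,ds)\mid cs,us,ds\in\mathcal{HU}\}\cup\{pqs(i,cs,us,[t|ds])\in\mathcal{HB}\mid i>0$ a natural number, $1,\dots,i$ are members of $cs$, and if $cs$ is a list of distinct members then $(cs,us,ds)$ is correct up to $i$ w.r.t. $i\}$; $S=S_{pq}\cup S_{pqs}$. *)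

(* Defs.v *)
From Stdlib Require Import List Arith ZArith Lia.
Import ListNotations.

Inductive term : Type :=
| Zero : term
| Succ : term -> term
| Nil : term
| Cons : term -> term -> term.

Inductive atom : Type :=
| PQS : term -> term -> term -> term -> atom
| PQ  : term -> term -> term -> term -> atom.

Fixpoint nat_term (i : nat) : term :=
  match i with O => Zero | S n => Succ (nat_term n) end.

(* Prolog list notation [e1,...,en | e] *)
Definition lst (es : list term) (e : term) : term := fold_right Cons e es.

Definition kth_member (e : term) (k : nat) (t : term) : Prop :=
  1 <= k /\ exists (es : list term) (e' : term),
    length es = k - 1 /\ t = lst (es ++ [e]) e'.

Definition member (e t : term) : Prop := exists k, kth_member e k t.

Definition distinct_list (t : term) : Prop :=
  exists es : list term, t = lst es Nil /\ NoDup es.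

Definition updiag (cs : term) (i j : nat) (l : Z) : Prop :=
  exists k, kth_member (nat_term j) k cs /\
            l = (Z.of_nat k + Z.of_nat j - Z.of_nat i)%Z.
Definition downdiag (cs : term) (i j : nat) (l : Z) : Prop :=
  exists k, kth_member (nat_term j) k cs /\
            l = (Z.of_nat k + Z.of_nat i - Z.of_nat j)%Z.

Definition correct_upto (cs us ds : term) (m i : nat) : Prop :=
  m <= i /\
  distinct_list cs /\
  (forall j, 1 <= j <= m -> member (nat_term j) cs) /\
  (forall j1 j2 l1 l2, 1 <= j1 <= m -> 1 <= j2 <= m -> j1 <> j2 ->
     updiag cs i j1 l1 -> updiag cs i j2 l2 -> l1 <> l2) /\
  (forall j1 j2 l1 l2, 1 <= j1 <= m -> 1 <= j2 <= m -> j1 <> j2 ->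
     downdiag cs i j1 l1 -> downdiag cs i j2 l2 -> l1 <> l2) /\
  (forall j l, 1 <= j <= m -> updiag cs i j l -> (0 < l)%Z ->
     kth_member (nat_term j) (Z.to_nat l) us) /\
  (forall j l, 1 <= j <= m -> downdiag cs i j l -> (0 < l)%Z ->
     kth_member (nat_term j) (Z.to_nat l) ds).

(* Ground instances H <- B of the clauses of NQUEENS *)
Inductive ground_clause : atom -> list atom -> Prop :=
| gC1 : forall x1 x2 x3, ground_clause (PQS Zero x1 x2 x3) []
| gC2 : forall i cs us x ds y,
    ground_clause (PQS (Succ i) cs us (Cons x ds))
                  [PQS i cs (Cons y us) ds; PQ (Succ i) cs us ds]
| gC3 : forall i x1 x2 x3,
    ground_clause (PQ i (Cons i x1) (Cons i x2) (Cons i x3)) []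
| gC4 : forall i x1 cs x2 us x3 ds,
    ground_clause (PQ i (Cons x1 cs) (Cons x2 us) (Cons x3 ds)) [PQ i cs us ds].

(* Herbrand interpretations as predicates on HB; Herbrand models of NQUEENS *)
Definition is_model (I : atom -> Prop) : Prop :=
  forall H B, ground_clause H B -> (forall b, In b B -> I b) -> I H.

(* least Herbrand model M_P : intersection of all Herbrand models *)
Definition least_model (a : atom) : Prop :=
  forall I, is_model I -> I a.

Definition S_pq (a : atom) : Prop :=
  match a with
  | PQ i c0 u0 d0 =>
      exists (cs us ds : list term) (c u d : term),
        length cs = length us /\ length us = length ds /\
        c0 = lst cs (Cons i c) /\ u0 = lst us (Cons i u) /\ d0 = lst ds (Cons i d)
  | PQS _ _ _ _ => False
  end.

Definition S_pqs (a : atom) : Prop :=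
  match a with
  | PQS i0 cs us ds0 =>
      i0 = Zero \/
      exists (i : nat) (t ds : term),
        i0 = nat_term i /\ 0 < i /\ ds0 = Cons t ds /\
        (forall j, 1 <= j <= i -> member (nat_term j) cs) /\
        (distinct_list cs -> correct_upto cs us ds i i)
  | PQ _ _ _ _ => False
  end.

Definition S_spec (a : atom) : Prop := S_pq a \/ S_pqs a.

(* Main.v *)
Require Import Defs.
From Stdlib Require Import List Arith ZArith Lia.
Import ListNotations.

Fixpoint nth_t (k : nat) (t : term) : option term :=
  match t with
  | Cons a t' => match k with 0 => None | 1 => Some a | S k' => nth_t k' t' end
  | _ => None end.

Lemma nth_cons k a t : 1 <= k -> nth_t (S k) (Cons a t) = nth_t k t.
Proof. intros H. destruct k; [lia|reflexivity]. Qed.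

Lemma kth_iff e k t : kth_member e k t <-> nth_t k t = Some e.
Proof.
  split.
  - intros [Hk [es [e' [Hl ->]]]].
    assert (k = S (length es)) by lia. subst k. clear.
    induction es as [|a es IH]; [reflexivity|].
    unfold lst in *. simpl in *. destruct es; simpl in *; auto.
  - revert t. induction k as [|k IH]; intros t H.
    + destruct t; discriminate.
    + destruct t as [| |t1|t1 t2]; try discriminate.
      destruct k as [|k].
      * simpl in H. injection H as ->. split; [lia|]. exists [], t2. auto.
      * simpl in H. destruct (IH t2 H) as [_ [es [e' [Hl Ht]]]].
        split; [lia|]. exists (t1 :: es), e'. split; [simpl; lia|].
        rewrite Ht. reflexivity.
Qed.

Lemma nth_lst_app l x c : nth_t (S (length l)) (lst l (Cons x c)) = Some x.
Proof.
  induction l as [|a l IH]; [reflexivity|].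
  unfold lst in *; simpl in *. destruct l; simpl in *; auto.
Qed.

Lemma nth_in es k e : nth_t k (lst es Nil) = Some e -> In e es.
Proof.
  revert k; induction es as [|a es IH]; intros k H; [simpl in H; destruct k; discriminate|].
  destruct k as [|[|k]]; simpl in H; try discriminate.
  - injection H as ->; left; auto.
  - right; exact (IH (S k) H).
Qed.

Lemma nodup_uniq es k1 k2 e : NoDup es -> nth_t k1 (lst es Nil) = Some e ->
  nth_t k2 (lst es Nil) = Some e -> k1 = k2.
Proof.
  revert k1 k2; induction es as [|a es IH]; intros k1 k2 Hn H1 H2; [simpl in H1; destruct k1; discriminate|].
  inversion Hn; subst.
  destruct k1 as [|[|k1]]; destruct k2 as [|[|k2]]; simpl in H1, H2; try discriminate; auto.
  - injection H1 as ->. exfalso. apply H3. exact (nth_in _ (S k2) _ H2).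
  - injection H2 as ->. exfalso. apply H3. exact (nth_in _ (S k1) _ H1).
Qed.

Lemma dist_uniq t k1 k2 e : distinct_list t -> nth_t k1 t = Some e ->
  nth_t k2 t = Some e -> k1 = k2.
Proof. intros [es [-> Hn]]. apply nodup_uniq; auto. Qed.

Lemma nat_term_inj a b : nat_term a = nat_term b -> a = b.
Proof.
  revert b; induction a; destruct b; simpl; intros H; try discriminate; auto.
  injection H as H; f_equal; auto.
Qed.

Lemma step cs us ds' t y m p (Hd: distinct_list cs)
 (Pc : nth_t p cs = Some (nat_term (S m))) (Pu : nth_t p us = Some (nat_term (S m)))
 (Pd : nth_t p (Cons t ds') = Some (nat_term (S m))) (Hp: 1 <= p)
 (C : correct_upto cs (Cons y us) ds' m m)
 (Mem: forall j, 1<=j<=S m -> member (nat_term j) cs) :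
 correct_upto cs us (Cons t ds') (S m) (S m).
Proof.
  destruct C as (_&_&_&Cu&Cd&Cum&Cdm).
  assert (U : forall k, kth_member (nat_term (S m)) k cs -> k = p).
  { intros k K. apply kth_iff in K. eapply dist_uniq; eauto. }
  split; [lia|]. split; [exact Hd|]. split; [exact Mem|].
  split.
  { intros j1 j2 l1 l2 H1 H2 Hne [k1 [K1 E1]] [k2 [K2 E2]] Heq. pose proof (proj1 K1); pose proof (proj1 K2).
    destruct (Nat.eq_dec j1 (S m)) as [e1|e1]; destruct (Nat.eq_dec j2 (S m)) as [e2|e2].
    - lia.
    - subst j1. apply U in K1. subst k1.
      assert (Hq : updiag cs m j2 (l2+ 1)%Z) by (exists k2; split; [exact K2|lia]).
      assert (X := Cum j2 (l2+ 1)%Z ltac:(lia) Hq ltac:(lia)).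
      apply kth_iff in X. replace (Z.to_nat (l2+1)) with (S p) in X by lia.
      rewrite nth_cons in X by lia. rewrite Pu in X. injection X as X.
      change (Succ (nat_term m)) with (nat_term (S m)) in X; apply nat_term_inj in X. lia.
    - subst j2. apply U in K2. subst k2.
      assert (Hq : updiag cs m j1 (l1+ 1)%Z) by (exists k1; split; [exact K1|lia]).
      assert (X := Cum j1 (l1+ 1)%Z ltac:(lia) Hq ltac:(lia)).
      apply kth_iff in X. replace (Z.to_nat (l1+1)) with (S p) in X by lia.
      rewrite nth_cons in X by lia. rewrite Pu in X. injection X as X.
      change (Succ (nat_term m)) with (nat_term (S m)) in X; apply nat_term_inj in X. lia.
    - apply (Cu j1 j2 (l1+1)%Z (l2+1)%Z); try lia.
      + exists k1; split; auto; lia.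
      + exists k2; split; auto; lia. }
  split.
  { intros j1 j2 l1 l2 H1 H2 Hne [k1 [K1 E1]] [k2 [K2 E2]] Heq. pose proof (proj1 K1); pose proof (proj1 K2).
    destruct (Nat.eq_dec j1 (S m)) as [e1|e1]; destruct (Nat.eq_dec j2 (S m)) as [e2|e2].
    - lia.
    - subst j1. apply U in K1. subst k1.
      assert (Hq : downdiag cs m j2 (l2- 1)%Z) by (exists k2; split; [exact K2|lia]).
      assert (X := Cdm j2 (l2- 1)%Z ltac:(lia) Hq ltac:(lia)).
      apply kth_iff in X. replace p with (S (Z.to_nat (l2-1))) in Pd by lia.
      rewrite nth_cons in Pd by lia. rewrite Pd in X. injection X as X.
      change (Succ (nat_term m)) with (nat_term (S m)) in X; apply nat_term_inj in X. lia.
    - subst j2. apply U in K2. subst k2.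
      assert (Hq : downdiag cs m j1 (l1- 1)%Z) by (exists k1; split; [exact K1|lia]).
      assert (X := Cdm j1 (l1- 1)%Z ltac:(lia) Hq ltac:(lia)).
      apply kth_iff in X. replace p with (S (Z.to_nat (l1-1))) in Pd by lia.
      rewrite nth_cons in Pd by lia. rewrite Pd in X. injection X as X.
      change (Succ (nat_term m)) with (nat_term (S m)) in X; apply nat_term_inj in X. lia.
    - apply (Cd j1 j2 (l1-1)%Z (l2-1)%Z); try lia.
      + exists k1; split; auto; lia.
      + exists k2; split; auto; lia. }
  split.
  { intros j l Hj [k [K E]] Hl. pose proof (proj1 K). apply kth_iff.
    destruct (Nat.eq_dec j (S m)) as [e|e].
    - subst j. apply U in K. subst k. replace (Z.to_nat l) with p by lia. exact Pu.
    - assert (Hq : updiag cs m j (l+ 1)%Z) by (exists k; split; [exact K|lia]).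
      assert (X := Cum j (l+ 1)%Z ltac:(lia) Hq ltac:(lia)).
      apply kth_iff in X. replace (Z.to_nat (l+1)) with (S (Z.to_nat l)) in X by lia.
      rewrite nth_cons in X by lia. exact X. }
  { intros j l Hj [k [K E]] Hl. pose proof (proj1 K). apply kth_iff.
    destruct (Nat.eq_dec j (S m)) as [e|e].
    - subst j. apply U in K. subst k. replace (Z.to_nat l) with p by lia. exact Pd.
    - assert (Hq : downdiag cs m j (l- 1)%Z) by (exists k; split; [exact K|lia]).
      assert (X := Cdm j (l- 1)%Z ltac:(lia) Hq ltac:(lia)).
      apply kth_iff in X. replace (Z.to_nat l) with (S (Z.to_nat (l-1))) by lia.
      rewrite nth_cons by lia. exact X. }
Qed.

Lemma model : is_model S_spec.
Proof.
  intros H B HC HB. destruct HC.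
  - right. simpl. left. reflexivity.
  - assert (b1 := HB _ (or_introl eq_refl)).
    assert (b2 := HB _ (or_intror (or_introl eq_refl))).
    destruct b2 as [b2|b2]; [|simpl in b2; contradiction]. simpl in b2.
    destruct b2 as (csl&usl&dsl&c&u&d&L1&L2&Ec&Eu&Ed).
    destruct b1 as [b1|b1]; [simpl in b1; contradiction|]. simpl in b1.
    set (p := S (length csl)).
    assert (Pc : nth_t p cs = Some (Succ i)) by (rewrite Ec; apply nth_lst_app).
    assert (Pu : nth_t p us = Some (Succ i)) by (rewrite Eu; unfold p; rewrite L1; apply nth_lst_app).
    assert (Pd : nth_t p ds = Some (Succ i)) by (rewrite Ed; unfold p; rewrite L1, L2; apply nth_lst_app).
    assert (Hb : exists m, i = nat_term m /\ (forall j, 1<=j<=m -> member (nat_term j) cs) /\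
       (distinct_list cs -> exists t ds', ds = Cons t ds' /\ correct_upto cs (Cons y us) ds' m m)).
    { destruct b1 as [Ei | (m & t & ds' & Ei & Hm & Eds & Mem & Cor)].
      - exists 0. split; [exact Ei|]. split; [intros; lia|]. intros Hd.
        destruct dsl as [|a dsl]; [exists (Succ i), d | exists a, (lst dsl (Cons (Succ i) d))];
          (split; [exact Ed|]); unfold correct_upto; repeat split; intros; try lia; auto.
      - exists m. split; [exact Ei|]. split; [exact Mem|]. intros Hd. exists t, ds'. auto. }
    destruct Hb as (m & Ei & Mem & Cor).
    assert (Mem' : forall j, 1<=j<=S m -> member (nat_term j) cs).
    { intros j Hj. destruct (Nat.eq_dec j (S m)) as [e|e].
      - subst j. exists p. apply kth_iff. simpl. rewrite <- Ei. exact Pc.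
      - apply Mem; lia. }
    right. simpl. right. exists (S m), x, ds.
    split; [simpl; rewrite Ei; reflexivity|]. split; [lia|]. split; [reflexivity|].
    split; [exact Mem'|]. intros Hd.
    destruct (Cor Hd) as (t & ds' & Eds & C). rewrite Eds in Pd |- *.
    apply (step cs us ds' t y m p); auto; try (simpl; rewrite <- Ei; auto); unfold p; lia.
  - left. simpl. exists [], [], [], x1, x2, x3. auto.
  - assert (b := HB _ (or_introl eq_refl)).
    destruct b as [b|b]; [|simpl in b; contradiction]. simpl in b.
    destruct b as (csl&usl&dsl&c&u&d&L1&L2&Ec&Eu&Ed).
    left. simpl. exists (x1::csl), (x2::usl), (x3::dsl), c, u, d.
    simpl. rewrite Ec, Eu, Ed. repeat split; auto.
Qed.

Theorem mainTheorem2 :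
  (forall a : atom, least_model a -> S_spec a) /\ is_model S_spec.
Proof.
  split.
  - intros a Ha. apply Ha. apply model.
  - apply model.
Qed.
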